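(* Let $\bm{Z}=(Z_1,\ldots,Z_n)^T\in\{0,1\}^n$ with both treatment groups nonempty, and let $\bm{X}\in\mathbb{R}^{n\times p}$ be a covariate matrix whose first column is the all-ones vector, with rows $\bm{X}_1,\ldots,\bm{X}_n$. Let $\bm{\Sigma}$ be a symmetric positive definite $n\times n$ matrix with orthonormal eigenvectors $\bm{v}_1,\ldots,\bm{v}_n$ ($v_{ki}$ the $i$-th entry of $\bm{v}_k$) and eigenvalues $\lambda_1\ge\cdots\ge\lambda_n>0$. Assume $\bm{X}^T\bm{\Sigma}^{-1}\bm{X}$ is invertible and $\bm{Z}^T\bm{\Sigma}^{-1}(\bm{I}_n-\bm{X}(\bm{X}^T\bm{\Sigma}^{-1}\bm{X})^{-1}\bm{X}^T\bm{\Sigma}^{-1})\bm{Z}\neq0$. Then the solution of $$\min_{\bm{w}\in\mathbb{R}^n}\sum_{k=1}^n\lambda_k\Big(\sum_{i:Z_i=1}w_iv_{ki}-\sum_{i:Z_i=0}w_iv_{ki}\Big)^2$$ subject to $\sum_{i:Z_i=1}w_i=1$, $\sum_{i:Z_i=0}w_i=1$ and $\sum_{i:Z_i=1}w_i\bm{X}_i=\sum_{i:Z_i=0}w_i\bm{X}_i$ is $$\bm{w}=\bm{M}\,\frac{(\bm{I}_n-\bm{\Sigma}^{-1}\bm{X}(\bm{X}^T\bm{\Sigma}^{-1}\bm{X})^{-1}\bm{X}^T)\bm{\Sigma}^{-1}\bm{Z}}{\bm{Z}^T\bm{\Sigma}^{-1}(\bm{I}_n-\bm{X}(\bm{X}^T\bm{\Sigma}^{-1}\bm{X})^{-1}\bm{X}^T\bm{\Sigma}^{-1})\bm{Z}},$$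 with $\bm{M}$ diagonal, $M_{ii}=2Z_i-1$; i.e. the implied weights of the GLS estimator of the treatment coefficient.
   Context: The GLS estimator of $\tau$ in the model $\bm{Y}=\bm{X}\bm{\beta}+\tau\bm{Z}+\bm{\epsilon}$ with error covariance $\bm{\Sigma}$ is the last coordinate of $\big(\begin{pmatrix}\bm{X} & \bm{Z}\end{pmatrix}^T\bm{\Sigma}^{-1}\begin{pmatrix}\bm{X} & \bm{Z}\end{pmatrix}\big)^{-1}\begin{pmatrix}\bm{X} & \bm{Z}\end{pmatrix}^T\bm{\Sigma}^{-1}\bm{Y}$, and equals $\sum_{Z_i=1}w_iY_i-\sum_{Z_i=0}w_iY_i$ with $\bm{w}$ as displayed. *)

(* Defs.v *)
From HB Require Import structures.
From mathcomp Require Import all_boot all_order all_algebra.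
Set Implicit Arguments. Unset Strict Implicit. Unset Printing Implicit Defensive.
Import Order.TTheory GRing.Theory Num.Theory.
Local Open Scope ring_scope.

Section GLS.
Variables (R : realFieldType) (n p : nat).

Definition Zvec (Z : 'I_n -> bool) : 'cV[R]_n := \col_i (Z i)%:R.

Definition Mdiag (Z : 'I_n -> bool) : 'M[R]_n :=
  diag_mx (\row_i (2 * (Z i)%:R - 1)).

(* objective  sum_k lam_k (sum_{Z_i=1} w_i v_ki - sum_{Z_i=0} w_i v_ki)^2,
   where v_k is the k-th column of V, so v_ki = V i k *)
Definition objective (lam : 'I_n -> R) (V : 'M[R]_n) (Z : 'I_n -> bool)
    (w : 'cV[R]_n) : R :=
  \sum_k lam k * (\sum_(i | Z i) w i ord0 * V i k
                  - \sum_(i | ~~ Z i) w i ord0 * V i k) ^+ 2.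

Definition feasible (X : 'M[R]_(n, p)) (Z : 'I_n -> bool) (w : 'cV[R]_n) : Prop :=
  [/\ \sum_(i | Z i) w i ord0 = 1,
      \sum_(i | ~~ Z i) w i ord0 = 1 &
      forall j : 'I_p,
        \sum_(i | Z i) w i ord0 * X i j = \sum_(i | ~~ Z i) w i ord0 * X i j].

Definition gls_weights (X : 'M[R]_(n, p)) (Sigma : 'M[R]_n) (Z : 'I_n -> bool)
    : 'cV[R]_n :=
  let Si := invmx Sigma in
  let A := X^T *m Si *m X in
  let num := (1%:M - Si *m X *m invmx A *m X^T) *m Si *m Zvec Z in
  let den := (((Zvec Z)^T *m Si *m (1%:M - X *m invmx A *m X^T *m Si))
                *m Zvec Z) ord0 ord0 in
  den^-1 *: (Mdiag Z *m num).

End GLS.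

(* Main.v *)
Require Import Defs.
From HB Require Import structures.
From mathcomp Require Import all_boot all_order all_algebra.
From mathcomp Require Import ring.
Import Order.TTheory GRing.Theory Num.Theory.
Local Open Scope ring_scope.

Lemma sumM (R : realFieldType) n (Z : 'I_n -> bool) (w : 'cV[R]_n) (f : 'I_n -> R) :
  \sum_i f i * (Mdiag R Z *m w) i 0 =
  \sum_(i | Z i) w i 0 * f i - \sum_(i | ~~ Z i) w i 0 * f i.
Proof.
have E i : (Mdiag R Z *m w) i 0 = (2 * (Z i)%:R - 1) * w i 0.
  by rewrite /Mdiag mul_diag_mx !mxE.
rewrite (bigID Z) /=; congr (_ + _).
  by apply: eq_bigr => i hi; rewrite E hi /=; ring.
rewrite -sumrN; apply: eq_bigr => i /negbTE hi.
by rewrite E hi /=; ring.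
Qed.

Lemma MM (R : realFieldType) n (Z : 'I_n -> bool) :
  Mdiag R Z *m Mdiag R Z = 1%:M.
Proof.
rewrite /Mdiag mulmx_diag; apply/matrixP => i j; rewrite !mxE.
case: eqP => [->|_]; last by rewrite mulr0n.
by case: (Z j) => /=; ring.
Qed.

Lemma XtM (R : realFieldType) n p (Z : 'I_n -> bool) (X : 'M[R]_(n, p)) (w : 'cV[R]_n) (j : 'I_p) :
  (X^T *m (Mdiag R Z *m w)) j 0 =
  \sum_(i | Z i) w i 0 * X i j - \sum_(i | ~~ Z i) w i 0 * X i j.
Proof.
rewrite mxE -(sumM _ _ Z w (fun i => X i j)); apply: eq_bigr => i _; by rewrite mxE.
Qed.

Lemma ZtM (R : realFieldType) n (Z : 'I_n -> bool) (w : 'cV[R]_n) :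
  ((Zvec R Z)^T *m (Mdiag R Z *m w)) 0 0 = \sum_(i | Z i) w i 0.
Proof.
rewrite mxE.
have -> : \sum_j (Zvec R Z)^T 0 j * (Mdiag R Z *m w) j 0
    = \sum_j (Z j)%:R * (Mdiag R Z *m w) j 0.
  by apply: eq_bigr => j _; rewrite !mxE.
rewrite sumM.
have -> : \sum_(i | ~~ Z i) w i 0 * (Z i)%:R = 0.
  by apply: big1 => i /negbTE ->; rewrite mulr0.
rewrite subr0; apply: eq_bigr => i ->; by rewrite mulr1.
Qed.

Lemma objE (R : realFieldType) n (Z : 'I_n -> bool) (V : 'M[R]_n) lam w :
  objective lam V Z w =
  let y := V^T *m (Mdiag R Z *m w) in
  ((y^T *m diag_mx (\row_k lam k)) *m y) 0 0.
Proof.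
rewrite /objective /= mxE; apply: eq_bigr => k _.
rewrite mul_mx_diag !mxE -XtM.
rewrite -[X in _ * X ^+ 2]/((V^T *m (Mdiag R Z *m w)) k 0).
rewrite expr2 !mxE; ring.
Qed.

Lemma unit_of_pd (R : realFieldType) n (S : 'M[R]_n) :
  (forall x : 'cV[R]_n, x != 0 -> 0 < (x^T *m S *m x) 0 0) -> S \in unitmx.
Proof.
move=> hPD; rewrite -row_free_unit -kermx_eq0; apply/eqP/row_matrixP => i.
rewrite row0; set r := row i (kermx S).
have hr : r *m S = 0 by rewrite /r -row_mul mulmx_ker row0.
apply/eqP/negPn/negP => nz.
have nzT : r^T != 0 by apply: contra nz => /eqP h; rewrite -(trmxK r) h trmx0.
have := hPD _ nzT; by rewrite trmxK hr mul0mx mxE ltxx.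
Qed.

Theorem mainTheorem3 (R : realFieldType) (n p : nat)
  (Z : 'I_n -> bool) (X : 'M[R]_(n, p.+1)) (Sigma V : 'M[R]_n) (lam : 'I_n -> R) :
  (exists i, Z i) -> (exists i, ~~ Z i) ->
  (forall i, X i ord0 = 1) ->
  Sigma^T = Sigma ->
  (forall x : 'cV[R]_n, x != 0 -> 0 < (x^T *m Sigma *m x) ord0 ord0) ->
  V^T *m V = 1%:M ->
  (forall k, Sigma *m col k V = lam k *: col k V) ->
  (forall k l : 'I_n, (k <= l)%N -> lam l <= lam k) ->
  (forall k, 0 < lam k) ->
  X^T *m invmx Sigma *m X \in unitmx ->
  (((Zvec R Z)^T *m invmx Sigma
     *m (1%:M - X *m invmx (X^T *m invmx Sigma *m X) *m X^T *m invmx Sigma))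
     *m Zvec R Z) ord0 ord0 != 0 ->
  let w := gls_weights X Sigma Z in
  [/\ feasible X Z w,
      (forall w' : 'cV[R]_n, feasible X Z w' -> objective lam V Z w <= objective lam V Z w') &
      (forall w' : 'cV[R]_n, feasible X Z w' ->
         objective lam V Z w' = objective lam V Z w -> w' = w)].
Proof.
move=> _ _ hX1 hS hPD hV hcol _ _ hA hden w.
have SU : Sigma \in unitmx by apply: unit_of_pd.
set Si := invmx Sigma.
set A := X^T *m Si *m X.
set Zv := Zvec R Z.
set M := Mdiag R Z.
set den := ((Zv^T *m Si *m (1%:M - X *m invmx A *m X^T *m Si)) *m Zv) 0 0.
set N := (1%:M - Si *m X *m invmx A *m X^T) *m Si *m Zv.
have hSi : Si^T = Si by rewrite /Si trmx_inv hS.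
have VVt : V *m V^T = 1%:M by apply: mulmx1C.
set D := diag_mx (\row_k lam k).
have SigE : Sigma = V *m D *m V^T.
  have SV : Sigma *m V = V *m D.
    apply/matrixP => i k.
    have := hcol k => /matrixP/(_ i 0); rewrite /D mul_mx_diag !mxE => h.
    rewrite mulrC -h; by apply: eq_bigr => j _; rewrite !mxE.
  by rewrite -SV -mulmxA VVt mulmx1.
pose q (x : 'cV[R]_n) := (x^T *m Sigma *m x) 0 0.
have qE x : objective lam V Z x = q (M *m x).
  rewrite objE /q /= SigE trmx_mul !mulmxA.
  by rewrite trmxK.
have MMx x : M *m (M *m x) = x by rewrite mulmxA MM mul1mx.
have wE : M *m w = den^-1 *: N.
  by rewrite /w /gls_weights -/Si -/A -/Zv -/M -/den -/N scalemxAr MMx.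
have XN : X^T *m N = 0.
  rewrite /N !mulmxA mulmxBr mulmx1 !mulmxA -/A mulmxV // mul1mx subrr.
  by rewrite !mul0mx.
have ZN : (Zv^T *m N) 0 0 = den.
  rewrite /N /den; congr (_ 0 0).
  by rewrite !(mulmxBr, mulmxBl, mulmx1, mul1mx, mulmxA).
have SN : Sigma *m N = Zv - X *m (invmx A *m X^T *m Si *m Zv).
  by rewrite /N !(mulmxBr, mulmxBl, mulmx1, mul1mx, mulmxA) mulmxV // !mul1mx.
have XU : X^T *m (M *m w) = 0 by rewrite wE -scalemxAr XN scaler0.
have ZU : (Zv^T *m (M *m w)) 0 0 = 1.
  by rewrite wE -scalemxAr mxE ZN mulVf.
have feasU x : X^T *m (M *m x) = 0 -> (Zv^T *m (M *m x)) 0 0 = 1 -> feasible X Z x.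
  move=> hX hZ.
  have hs : \sum_(i | Z i) x i 0 = 1 by rewrite -ZtM.
  have hj j : \sum_(i | Z i) x i 0 * X i j = \sum_(i | ~~ Z i) x i 0 * X i j.
    have := XtM _ _ _ Z X x j; rewrite hX mxE => h.
    by apply/eqP; rewrite -subr_eq0 -h.
  split => //.
  have := hj ord0.
  have e (P : pred 'I_n) : \sum_(i | P i) x i 0 * X i ord0 = \sum_(i | P i) x i 0.
    by apply: eq_bigr => i _; rewrite hX1 mulr1.
  by rewrite !e hs.
have feasD x : feasible X Z x -> X^T *m (M *m x) = 0 /\ (Zv^T *m (M *m x)) 0 0 = 1.
  case=> h1 h2 h3; split; last by rewrite ZtM.
  apply/matrixP => j k; rewrite (ord1 k) XtM h3 subrr mxE //.
have addE (B C : 'M[R]_1) : (B + C) 0 0 = B 0 0 + C 0 0 by rewrite mxE.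
have trE (B : 'M[R]_1) : B 0 0 = B^T 0 0 by rewrite mxE.
have key w' : feasible X Z w' ->
    objective lam V Z w' = objective lam V Z w + q (M *m w' - M *m w).
  move=> /feasD [XU' ZU'].
  set u0 := M *m w in XU ZU wE *; set d := M *m w' - u0.
  have XD : X^T *m d = 0 by rewrite mulmxBr XU' XU subrr.
  have ZD : (Zv^T *m d) 0 0 = 0.
    by rewrite mulmxBr mxE ZU' mxE ZU subrr.
  have cross : (d^T *m Sigma *m u0) 0 0 = 0.
    rewrite wE -scalemxAr mxE -mulmxA SN mulmxBr mulmxA.
    have -> : d^T *m X = 0 by rewrite -(trmxK X) -trmx_mul XD trmx0.
    rewrite mul0mx subr0 trE trmx_mul trmxK ZD mulr0 //.
  have cross2 : (u0^T *m Sigma *m d) 0 0 = (d^T *m Sigma *m u0) 0 0.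
    by rewrite trE !trmx_mul !trmxK hS mulmxA.
  rewrite !qE -/u0.
  have -> : M *m w' = u0 + d by rewrite /d addrC subrK.
  rewrite /q mulmxDr [(u0 + d)^T]linearD /= !mulmxDl !addE cross2 cross addr0 add0r.
  rewrite -/u0; ring.
split.
- exact: feasU.
- move=> w' /key ->; rewrite lerDl /q.
  case: (eqVneq (M *m w' - M *m w) 0) => [->|nz]; last exact: ltW (hPD _ nz).
  by rewrite mulmx0 mxE.
- move=> w' /key -> /eqP; rewrite addrC -subr_eq0 addrK => /eqP hq.
  have d0 : M *m w' - M *m w = 0.
    apply/eqP/negPn/negP => nz; have := hPD _ nz; by rewrite -/(q _) hq ltxx.
  by rewrite -(MMx _ w') -(MMx _ w); congr (_ *m _); apply/eqP; rewrite -subr_eq0 d0.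
Qed.
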